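(* There exists a Stackelberg game $(G,L,F)$ such that $\mathcal{X}^{PS}\not\subseteq\mathcal{X}^{CCE}$.
   Context: A finite game is $G=(N,\{S_p\}_{p\in N},\{u_p\}_{p\in N})$ with players $N=\{1,\dots,n\}$, finite nonempty strategy sets $S_p$, and utilities $u_p:S\to\mathbb{R}$ on $S=\prod_{p\in N}S_p$; write $s=(s_p,s_{-p})$ with $s_{-p}\in S_{-p}=\prod_{q\neq p}S_q$. $\mathcal{X}=\Delta(S)$ is the set of probability distributions on $S$ and $u_p(x)=\sum_{s\in S}x(s)u_p(s)$ for $x\in\mathcal{X}$. For $P\subseteq N$, $\mathcal{X}^{CE}_P$ is the set of $x\in\mathcal{X}$ such that for every $p\in P$ and all $s_p\neq s_p'\in S_p$: $\sum_{s_{-p}\in S_{-p}} x(s_p,s_{-p})\,(u_p(s_p,s_{-p})-u_p(s_p',s_{-p}))\ge 0$; $\mathcal{X}^{CE}=\mathcal{X}^{CE}_N$ is the set of correlated equilibria of $G$. $\mathcal{X}^{CCE}$ is the set of coarse correlated equilibria of $G$: $x\in\mathcal{X}$ with $\sum_{s\in S}x(s)(u_p(s)-u_p(s_p',s_{-p}))\ge 0$ for all $p\in N$, $s_p'\in S_p$. A Stackelberg game (SG) is a triple $(G,L,F)$ with $L\cup F=N$ and $L\cap F=\emptyset$ (leaders and followers). For $P\subseteq N$, $\Pi_P$ is the set of ordered subsets of $P$ (finite sequences of pairwise distinct elements of $P$, including the empty sequence $\varnothing$); for $\pi\in\Pi_P$ and $p\in P$ not occurring in $\pi$, $\pi p$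 is $\pi$ with $p$ appended; when used as a set, $\pi$ means its set of entries. $\mathbf{X}=\prod_{\pi\in\Pi_L}\mathcal{X}^{CE}_{\pi\cup F}$, with elements $\mathbf{x}=[x_\pi]_{\pi\in\Pi_L}$. For $\mathbf{x}\in\mathbf{X}$ and $\pi\in\Pi_L$, $x_\pi$ is stable if $u_p(x_\pi)\ge u_p(x_{\pi p})$ for all $p\in L\setminus\pi$; $\mathbf{x}$ is stable if $x_\varnothing$ is stable, and perfectly stable if $x_\pi$ is stable for every $\pi\in\Pi_L$; $\mathbf{X}^{S}$ and $\mathbf{X}^{PS}$ denote the sets of stable and perfectly stable elements of $\mathbf{X}$. $\mathcal{X}^S=\{x_\varnothing:\mathbf{x}\in\mathbf{X}^S\}$ and $\mathcal{X}^{PS}=\{x_\varnothing:\mathbf{x}\in\mathbf{X}^{PS}\}$ (for the given SG). *)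

(* Defs.v *)
From HB Require Import structures.
From mathcomp Require Import all_boot all_order all_algebra.
Set Implicit Arguments. Unset Strict Implicit. Unset Printing Implicit Defensive.
Import Order.TTheory GRing.Theory Num.Theory.
Local Open Scope ring_scope.

Definition profile (n : nat) (S : 'I_n -> finType) : finType :=
  {dffun forall p : 'I_n, S p}.

Record game (R : realFieldType) := Game {
  g_n : nat;
  g_S : 'I_g_n -> finType;
  g_Sne : forall p, (0 < #|g_S p|)%N;
  g_u : 'I_g_n -> profile g_S -> R }.
Arguments g_n {R} g.
Arguments g_S {R} g p.
Arguments g_Sne {R} g p.
Arguments g_u {R} g p s.

Section GameDefs.
Variables (R : realFieldType) (G : game R).

Local Notation N := 'I_(g_n G).
Local Notation S := (profile (g_S G)).
Local Notation u := (g_u G).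

Definition deviate (s : S) (p : N) (b : g_S G p) : S :=
  [ffun q => dfwith (fun q => s q) b q].

Definition is_dist (x : {ffun S -> R}) : Prop :=
  (forall s, 0 <= x s) /\ \sum_(s : S) x s = 1.

Definition exp_util (p : N) (x : {ffun S -> R}) : R := \sum_(s : S) x s * u p s.

(* X^CE_P: the sum over s_{-p} of x(s_p,s_{-p})(u_p(s_p,s_{-p}) - u_p(s_p',s_{-p}))
   is written as the sum over profiles s with s p = a. *)
Definition CE_P (P : {set N}) (x : {ffun S -> R}) : Prop :=
  is_dist x /\
  forall p, p \in P -> forall a b : g_S G p, a != b ->
    0 <= \sum_(s : S | s p == a) x s * (u p s - u p (deviate s b)).

Definition CCE (x : {ffun S -> R}) : Prop :=
  is_dist x /\
  forall (p : N) (b : g_S G p), 0 <= \sum_(s : S) x s * (u p s - u p (deviate s b)).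

Definition stackelberg (L F : {set N}) : Prop := L :|: F = setT /\ L :&: F = set0.

Definition ordered_subset (L : {set N}) (pi : seq N) : Prop :=
  uniq pi /\ {subset pi <= L}.

(* bold x in bold X = prod_{pi in Pi_L} X^CE_{pi u F}; represented as a function on
   sequences, only its values on Pi_L matter. *)
Definition in_bX (L F : {set N}) (xx : seq N -> {ffun S -> R}) : Prop :=
  forall pi, ordered_subset L pi -> CE_P ([set q | q \in pi] :|: F) (xx pi).

Definition stable_at (L : {set N}) (xx : seq N -> {ffun S -> R}) (pi : seq N) : Prop :=
  forall p, p \in L -> p \notin pi -> exp_util p (xx (rcons pi p)) <= exp_util p (xx pi).

Definition perfectly_stable (L : {set N}) (xx : seq N -> {ffun S -> R}) : Prop :=
  forall pi, ordered_subset L pi -> stable_at L xx pi.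

Definition in_XPS (L F : {set N}) (x : {ffun S -> R}) : Prop :=
  exists xx, [/\ in_bX L F xx, perfectly_stable L xx & xx [::] = x].

End GameDefs.

(* Main.v *)
Require Import Defs.
From HB Require Import structures.
From mathcomp Require Import all_boot all_order all_algebra.
From mathcomp Require Import lra.
Set Implicit Arguments. Unset Strict Implicit. Unset Printing Implicit Defensive.
Import Order.TTheory GRing.Theory Num.Theory.
Local Open Scope ring_scope.

Definition o1 : 'I_2 := @Ordinal 2 1 isT.
Definition S2 : 'I_2 -> finType := fun _ => bool.
Lemma S2ne p : (0 < #|S2 p|)%N. Proof. by rewrite card_bool. Qed.

Definition u2 (R : realFieldType) (p : 'I_2) (s : profile S2) : R :=
  let a : bool := s ord0 in let b : bool := s o1 in
  if p == ord0 then (if a then (if b then 2 else 0) else (if b then 3 else 1))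
  else (if a == b then 1 else 0).

Definition G2 (R : realFieldType) : game R := @Game R 2 S2 S2ne (@u2 R).

Definition sTl : profile S2 := [ffun p => (true : S2 p)].
Definition sBr : profile S2 := [ffun p => (false : S2 p)].

Definition delta (R : realFieldType) (s0 : profile S2) : {ffun profile S2 -> R} :=
  [ffun s => if s == s0 then 1 else 0].

Lemma sum_delta (R : realFieldType) (P : pred (profile S2)) s0 (f : profile S2 -> R) :
  \sum_(s | P s) delta R s0 s * f s = if P s0 then f s0 else 0.
Proof.
case: (boolP (P s0)) => H.
  rewrite (bigD1 s0) //= ffunE eqxx mul1r big1 ?addr0 // => s /andP[_ /negbTE Hs].
  by rewrite ffunE Hs mul0r.
rewrite big1 // => s Ps; rewrite ffunE; case: eqP => [e|_]; last by rewrite mul0r.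
by subst; rewrite Ps in H.
Qed.

Lemma delta_dist (R : realFieldType) s0 : is_dist (G := G2 R) (delta R s0).
Proof.
split.
  by move=> s; rewrite ffunE; case: eqP.
have := @sum_delta R predT s0 (fun _ => 1).
rewrite /= => E. rewrite -[RHS]E. by apply: eq_bigr => s _; rewrite mulr1.
Qed.


Lemma sum_delta_all (R : realFieldType) s0 (f : profile S2 -> R) :
  \sum_s delta R s0 s * f s = f s0.
Proof. exact: (@sum_delta R predT s0 f). Qed.

Lemma dev_eq (R : realFieldType) (s : profile S2) (p : 'I_2) (b : bool) q :
  deviate (G := G2 R) s (p := p) b q = (if p == q then b else s q : bool).
Proof.
rewrite /deviate ffunE; case: (eqVneq p q) => [<-|H].
  by rewrite dfwith_in.
by rewrite dfwith_out.
Qed.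

Lemma ord2_cases (p : 'I_2) : p = ord0 \/ p = o1.
Proof. case: p => [[|[|]]] //= H; [left|right]; exact: val_inj. Qed.

Lemma CE_Br (R : realFieldType) (P : {set 'I_2}) : CE_P (G := G2 R) P (delta R sBr).
Proof.
split; first exact: delta_dist.
move=> p _ a b ab; rewrite sum_delta; case: ifP => // _.
rewrite /= /u2 !dev_eq /sBr !ffunE.
case: (ord2_cases p) => Ep; subst p; case: a b ab => [] [] //= _; lra.
Qed.

Lemma CE_Tl (R : realFieldType) (P : {set 'I_2}) : ord0 \notin P -> CE_P (G := G2 R) P (delta R sTl).
Proof.
move=> H0; split; first exact: delta_dist.
move=> p Hp a b ab; rewrite sum_delta; case: ifP => // _.
rewrite /= /u2 !dev_eq /sTl !ffunE.
case: (ord2_cases p) => Ep; first by subst p; rewrite Hp in H0.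
subst p; case: a b ab => [] [] //= _; lra.
Qed.

Theorem mainTheorem13 (R : realFieldType) :
  exists (G : game R) (L F : {set 'I_(g_n G)}),
    stackelberg L F /\
    exists x : {ffun profile (g_S G) -> R}, in_XPS L F x /\ ~ CCE x.
Proof.
exists (G2 R), [set ord0], [set o1].
split.
  split; apply/setP => i; rewrite !inE; by case: (ord2_cases i) => ->.
exists (delta R sTl); split.
  exists (fun pi => if pi is [::] then delta R sTl else delta R sBr); split => //.
    move=> [|q pi] _; last exact: CE_Br.
    by apply: CE_Tl; rewrite !inE.
  move=> [|q pi] _ p; last by rewrite rcons_cons.
  rewrite inE => /eqP -> _ /=.
  rewrite /exp_util !sum_delta_all /= /u2 /sBr /sTl !ffunE /=; lra.
case=> _ /(_ ord0 false).
rewrite sum_delta_all /= /u2 !dev_eq /sTl !ffunE /=; lra.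
Qed.
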